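(* The class of penny graphs is $(6,1)$-disjointness-expressing.
   Context: A penny graph is the contact graph of a family of pairwise interior-disjoint unit disks in the plane (vertices are the disks, adjacent iff the disks touch). A class $\mathcal{C}$ of graphs is $(s,\kappa)$-disjointness-expressing if for some constant $\alpha>0$, for every positive integer $N$ and every $X\subseteq\{1,\dots,N\}$ one can define graphs $L(X)$ and $R(X)$, each containing a labelled set $S$ of special vertices, such that for all $A,B\subseteq\{1,\dots,N\}$: (i) the graph $g(L(A),R(B))$ obtained by identifying each vertex of $S$ in $L(A)$ with the corresponding vertex of $S$ in $R(B)$ is connected and has at most $\alpha N^{1/\kappa}$ vertices; (ii) the subgraph of $g(L(A),R(B))$ induced by the closed neighborhood $N[S]$ is independent of $A,B$ (for all $A,A',B,B'$ there is an isomorphism between these induced subgraphs that is the identity on $S$) and has at most $s$ vertices; (iii) $g(L(A),R(B))\in\mathcal{C}$ if and only if $A\cap B=\emptyset$. *)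

(* Defs.v *)
From mathcomp Require Import all_boot.
From Stdlib Require Import Reals.

Set Implicit Arguments.
Unset Strict Implicit.
Unset Printing Implicit Defensive.

Definition pdist (p q : R * R) : R :=
  sqrt ((fst p - fst q)^2 + (snd p - snd q)^2)%R.

(** A graph (V, e) is a penny graph if there is a family of unit disks
    (given by their centres c v) that are pairwise interior-disjoint
    (distinct centres at distance >= 2) and two vertices are adjacent
    iff their disks touch (centres at distance exactly 2). *)
Definition penny (V : finType) (e : rel V) : Prop :=
  exists c : V -> R * R,
    (forall u v : V, u != v -> (2 <= pdist (c u) (c v))%R) /\
    (forall u v : V, e u v <-> pdist (c u) (c v) = 2%R).

Record sgraph (k : nat) := SGraph {
  sn : nat;
  sadj : rel 'I_sn;
  sS : 'I_k -> 'I_sn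
}.
Arguments sn {k} _.
Arguments sadj {k} _ _ _.
Arguments sS {k} _ _.

Definition sgraph_wf k (G : sgraph k) : Prop :=
  symmetric (sadj G) /\ irreflexive (sadj G) /\ injective (sS G).

Section Glue.
Variables (k : nat) (L Rg : sgraph k).

(** vertices of the glued graph g(L,R): all vertices of L, plus the
    non-special vertices of R. *)
Definition gV : finType :=
  ('I_(sn L) + {v : 'I_(sn Rg) | ~~ [exists i, sS Rg i == v]})%type.

Lemma nopick_notS (v : 'I_(sn Rg)) :
  (fun i => sS Rg i == v) =1 xpred0 -> ~~ [exists i, sS Rg i == v].
Proof. by move=> H; apply/existsP => -[i]; rewrite H. Qed.

(** image of a vertex of R in the glued graph: the special vertex with
    label i of R is identified with the special vertex with label i of L. *)
Definition liftR (v : 'I_(sn Rg)) : gV :=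
  match pickP (fun i => sS Rg i == v) with
  | Pick i _ => inl (sS L i)
  | Nopick H => inr (exist _ v (nopick_notS H))
  end.

Definition liftL (u : 'I_(sn L)) : gV := inl u.

Definition gadj : rel gV := fun x y =>
  [exists u, exists w, [&& sadj L u w, liftL u == x & liftL w == y]] ||
  [exists u, exists w, [&& sadj Rg u w, liftR u == x & liftR w == y]].

Definition gspec (i : 'I_k) : gV := liftL (sS L i).

Definition gNS : {set gV} :=
  [set x | [exists i, (x == gspec i) || gadj (gspec i) x]].

End Glue.
Arguments gV {k} L Rg.
Arguments liftR {k} L Rg v.
Arguments liftL {k} L Rg u.
Arguments gadj {k} L Rg _ _.
Arguments gspec {k} L Rg i.
Arguments gNS {k} L Rg.

Definition NS_iso k (L1 R1 L2 R2 : sgraph k) : Prop :=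
  exists f : gV L1 R1 -> gV L2 R2,
    {in gNS L1 R1 &, injective f} /\
    f @: gNS L1 R1 = gNS L2 R2 /\
    {in gNS L1 R1 &, forall x y, gadj L2 R2 (f x) (f y) = gadj L1 R1 x y} /\
    (forall i, f (gspec L1 R1 i) = gspec L2 R2 i).

(** A class of graphs is given as a predicate on (finite vertex type,
    adjacency relation). Subsets of {1,...,N} are modelled as subsets of
    'I_N = {0,...,N-1}. *)
Definition disjointness_expressing
  (C : forall V : finType, rel V -> Prop) (s kappa : nat) : Prop :=
  exists alpha : R, (0 < alpha)%R /\
  forall N : nat, (0 < N)%N ->
  exists (k : nat) (L Rg : {set 'I_N} -> sgraph k),
    (forall X, sgraph_wf (L X) /\ sgraph_wf (Rg X)) /\
    (forall A B,
       (forall x y, connect (gadj (L A) (Rg B)) x y) /\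
       (INR #|gV (L A) (Rg B)| <= alpha * Rpower (INR N) (1 / INR kappa))%R) /\
    (forall A A' B B', NS_iso (L A) (Rg B) (L A') (Rg B')) /\
    (forall A B, (#|gNS (L A) (Rg B)| <= s)%N) /\
    (forall A B, C _ (gadj (L A) (Rg B)) <-> A :&: B = set0).

(* Main.v *)
Require Import Defs.
From Stdlib Require Import Reals ZArith Lia Lra.
From mathcomp Require Import all_boot zify.

Set Implicit Arguments.
Unset Strict Implicit.
Unset Printing Implicit Defensive.


Ltac zl := cbn [fst snd] in *; try Z.to_euclidean_division_equations; lia.

Definition Qd (p q : Z * Z) : Z :=
  let x := (fst p - fst q)%Z in let y := (snd p - snd q)%Z in (x*x + x*y + y*y)%Z.

Lemma Qd_sym p q : Qd p q = Qd q p.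
Proof. rewrite /Qd; lia. Qed.

Lemma Qd_refl p : Qd p p = 0%Z.
Proof. rewrite /Qd; lia. Qed.

Lemma Qd_ge0 p q : (0 <= Qd p q)%Z.
Proof.
rewrite /Qd.
set x := (fst p - fst q)%Z; set y := (snd p - snd q)%Z.
have E : (2 * (x*x + x*y + y*y) = x*x + y*y + (x+y)*(x+y))%Z by ring.
nia.
Qed.

Lemma Qd_small p q : (Qd p q <= 1)%Z ->
  (-1 <= fst p - fst q <= 1 /\ -1 <= snd p - snd q <= 1 /\
   -1 <= (fst p - fst q) + (snd p - snd q) <= 1)%Z.
Proof.
rewrite /Qd => H.
set x := (fst p - fst q)%Z in H *; set y := (snd p - snd q)%Z in H *.
have E : (2 * (x*x + x*y + y*y) = x*x + y*y + (x+y)*(x+y))%Z by ring.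
have Hx : (x*x <= 2)%Z by nia.
have Hy : (y*y <= 2)%Z by nia.
have Hxy : ((x+y)*(x+y) <= 2)%Z by nia.
split; [|split]; nia.
Qed.

Lemma Qd0 p q : Qd p q = 0%Z -> p = q.
Proof.
case: p q => [a b] [c d]; rewrite /Qd /= => H.
set x := (a - c)%Z in H; set y := (b - d)%Z in H.
have E : (2 * (x*x + x*y + y*y) = x*x + y*y + (x+y)*(x+y))%Z by ring.
have s1 := Z.square_nonneg x; have s2 := Z.square_nonneg y; have s3 := Z.square_nonneg (x+y).
have h1 : (x*x = 0)%Z by lia.
have h2 : (y*y = 0)%Z by lia.
apply Z.eq_mul_0 in h1; apply Z.eq_mul_0 in h2.
f_equal; rewrite /x /y in h1 h2; lia.
Qed.

Lemma Qd_u (a b : Z) p q : (fst p - fst q = a)%Z -> (snd p - snd q = b)%Z ->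
  Qd p q = (a*a + a*b + b*b)%Z.
Proof. by rewrite /Qd => -> ->. Qed.

Ltac qunit :=
  match goal with |- Qd ?p ?q = 1%Z =>
  first [ rewrite (@Qd_u 1 0 p q); [done|zl|zl]
        | rewrite (@Qd_u (-1) 0 p q); [done|zl|zl]
        | rewrite (@Qd_u 0 1 p q); [done|zl|zl]
        | rewrite (@Qd_u 0 (-1) p q); [done|zl|zl]
        | rewrite (@Qd_u 1 (-1) p q); [done|zl|zl]
        | rewrite (@Qd_u (-1) 1 p q); [done|zl|zl] ] end.

Definition zadd3 (p q w : Z * Z) : Z * Z :=
  (fst p + fst q - fst w, snd p + snd q - snd w)%Z.

Section Constr.
Variable N : nat.

Definition nL := (7*N+3).+1.
Definition nR := (7*N+14).+1.

Definition memS (A : {set 'I_N}) (t : nat) : bool :=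
  [exists j : 'I_N, (j \in A) && (nat_of_ord j == t)].

Definition posL (A : {set 'I_N}) (i : nat) : Z * Z :=
  if (i < 6*N+4)%N then (Z.of_nat i mod 2, Z.of_nat i / 2)%Z
  else let t := (i - (6*N+4))%N in
       if memS A t then (2, 3 * Z.of_nat t + 3)%Z else (-1, 3 * Z.of_nat t + 3)%Z.

Definition tabR : seq (Z * Z) :=
  [:: (0,0); (1,0); (1,-1); (2,-1); (2,-2); (3,-2); (3,-1); (4,-2); (4,-1); (5,-2)]%Z.

Definition posR (B : {set 'I_N}) (i : nat) : Z * Z :=
  if (i < 10)%N then nth (0,0)%Z tabR i
  else if (i < 6*N+15)%N then (4 + Z.of_nat (i-7) mod 2, Z.of_nat (i-7) / 2 - 2)%Z
  else let t := (i - (6*N+15))%N in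
       if memS B t then (3, 3 * Z.of_nat t + 3)%Z else (6, 3 * Z.of_nat t + 3)%Z.

Variables (A B : {set 'I_N}).

Lemma posL_spec i : (i < nL)%N ->
  ((i < 6*N+4)%N /\ posL A i = (Z.of_nat i mod 2, Z.of_nat i / 2)%Z) \/
  (exists t, (t < N)%N /\ i = (6*N+4+t)%N /\
     ((memS A t /\ posL A i = (2, 3 * Z.of_nat t + 3)%Z) \/
      (~~ memS A t /\ posL A i = (-1, 3 * Z.of_nat t + 3)%Z))).
Proof.
rewrite /nL /posL => Hi; case: ifP => H1; [by left|right].
exists (i - (6*N+4))%N; split; [lia|split; [lia|]].
by case: ifP => H2; [left|right].
Qed.

Lemma posR_spec i : (i < nR)%N ->
  ((i < 10)%N /\ posR B i = nth (0,0)%Z tabR i) \/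
  ((10 <= i < 6*N+15)%N /\ posR B i = (4 + Z.of_nat (i-7) mod 2, Z.of_nat (i-7) / 2 - 2)%Z) \/
  (exists t, (t < N)%N /\ i = (6*N+15+t)%N /\
     ((memS B t /\ posR B i = (3, 3 * Z.of_nat t + 3)%Z) \/
      (~~ memS B t /\ posR B i = (6, 3 * Z.of_nat t + 3)%Z))).
Proof.
rewrite /nR /posR => Hi; case: ifP => H0; [by left|right].
case: ifP => H1; [left; split=>//; lia|right].
exists (i - (6*N+15))%N; split; [lia|split; [lia|]].
by case: ifP => H2; [left|right].
Qed.


Ltac specL H := case: (posL_spec H) => [[hL ->]|[tL [htL [eL [[mL ->]|[mL ->]]]]]].
Ltac specR H := case: (posR_spec H) => [[hR ->]|[[hR ->]|[tR [htR [eR [[mR ->]|[mR ->]]]]]]].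
Ltac tab10 v := destruct v as [|[|[|[|[|[|[|[|[|[|v]]]]]]]]]]; cbn [nth tabR fst snd] in *.

Lemma memS_lt S t : memS S t -> (t < N)%N.
Proof. by case/existsP => j /andP [_ /eqP <-]. Qed.

Lemma cross_sep u v : (2 <= u)%N -> (u < nL)%N -> (2 <= v)%N -> (v < nR)%N ->
  (Qd (posL A u) (posR B v) <= 1)%Z ->
  exists t, (t < N)%N /\ u = (6*N+4+t)%N /\ v = (6*N+15+t)%N /\ memS A t /\ memS B t.
Proof.
move=> Hu1 Hu2 Hv1 Hv2 HQ; have := Qd_small HQ.
specL Hu2; specR Hv2; cbn [fst snd]; move=> [h1 [h2 h3]];
  try (exfalso; zl);
  try (match goal with H : is_true (v < 10)%N |- _ => tab10 v; exfalso; zl end).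
have E : tR = tL by zl.
subst tR; exists tL; split; [done|split; [done|split; [done|split; done]]].
Qed.


Lemma posL_strip i : (i < 6*N+4)%N -> posL A i = (Z.of_nat i mod 2, Z.of_nat i / 2)%Z.
Proof. by rewrite /posL => ->. Qed.

Lemma posL_tooth t : (t < N)%N -> posL A (6*N+4+t) =
  if memS A t then (2, 3 * Z.of_nat t + 3)%Z else (-1, 3 * Z.of_nat t + 3)%Z.
Proof.
move=> ht; rewrite /posL; case: ifP => h; first by exfalso; lia.
by have -> : (6*N+4+t - (6*N+4))%N = t by lia.
Qed.

Lemma posR_zig i : (10 <= i)%N -> (i < 6*N+15)%N ->
  posR B i = (4 + Z.of_nat (i-7) mod 2, Z.of_nat (i-7) / 2 - 2)%Z.
Proof.
move=> h1 h2; rewrite /posR; case: ifP => h; first by exfalso; lia.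
by rewrite h2.
Qed.

Lemma posR_tooth t : (t < N)%N -> posR B (6*N+15+t) =
  if memS B t then (3, 3 * Z.of_nat t + 3)%Z else (6, 3 * Z.of_nat t + 3)%Z.
Proof.
move=> ht; rewrite /posR; case: ifP => h; first by exfalso; lia.
case: ifP => h'; first by exfalso; lia.
by have -> : (6*N+15+t - (6*N+15))%N = t by lia.
Qed.

Lemma conflict t : (t < N)%N -> memS A t -> memS B t ->
  Qd (posL A (6*N+4+t)) (posR B (6*N+15+t)) = 1%Z.
Proof.
move=> ht hA hB; rewrite posL_tooth // posR_tooth // hA hB. qunit.
Qed.

Ltac specL0 H := case: (posL_spec H) => [[? ->]|[? [? [? [[? ->]|[? ->]]]]]].
Ltac specR0 H := case: (posR_spec H) => [[? ->]|[[? ->]|[? [? [? [[? ->]|[? ->]]]]]]].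

Lemma posL_inj i j : (i < nL)%N -> (j < nL)%N -> posL A i = posL A j -> i = j.
Proof.
move=> Hi Hj; specL0 Hi; specL0 Hj; move=> E; have e1 := f_equal fst E; have e2 := f_equal snd E; clear E; zl.
Qed.

Lemma posR_inj i j : (i < nR)%N -> (j < nR)%N -> posR B i = posR B j -> i = j.
Proof.
move=> Hi Hj; specR0 Hi; specR0 Hj; move=> E; have e1 := f_equal fst E; have e2 := f_equal snd E; clear E;
 try (match goal with H : is_true (i < 10)%N |- _ => tab10 i end);
 try (match goal with H : is_true (j < 10)%N |- _ => tab10 j end);
 cbn [nth tabR fst snd] in *; zl.
Qed.

Definition stepOK (ps : nat -> Z * Z) (i p q w : nat) : Prop :=
  (p < i)%N /\ (q < i)%N /\ (w < i)%N /\
  Qd (ps i) (ps p) = 1%Z /\ Qd (ps i) (ps q) = 1%Z /\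
  ps i = zadd3 (ps p) (ps q) (ps w) /\
  Qd (ps p) (ps q) = 1%Z /\ Qd (ps p) (ps w) = 1%Z /\ Qd (ps q) (ps w) = 1%Z.

Ltac fin := first [ zl | qunit | (rewrite /zadd3; f_equal; zl) ].

Lemma stepL i : (3 <= i)%N -> (i < nL)%N -> exists p q w, stepOK (posL A) i p q w.
Proof.
move=> H3 Hi; case: (posL_spec Hi) => [[h _]|[t [ht [-> _]]]].
- exists (i-1)%N, (i-2)%N, (i-3)%N.
  rewrite /stepOK !posL_strip; try zl.
  have [k Hk] : exists k, (i = 2*k \/ i = 2*k+1)%N by exists (i %/ 2); lia.
  by case: Hk => ek; rewrite ek; repeat split; fin.
- case hm : (memS A t).
  + exists (6*t+7)%N, (6*t+9)%N, (6*t+8)%N.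
    rewrite /stepOK posL_tooth // hm !posL_strip; try zl.
    by repeat split; fin.
  + exists (6*t+6)%N, (6*t+4)%N, (6*t+5)%N.
    rewrite /stepOK posL_tooth // hm !posL_strip; try zl.
    by repeat split; fin.
Qed.

Definition tabR13 : seq (Z * Z) := tabR ++ [:: (5,-1); (4,0); (5,0)]%Z.

Lemma posR_13 i : (i < 13)%N -> posR B i = nth (0,0)%Z tabR13 i.
Proof.
move=> h; case: (ltnP i 10) => h10.
- by rewrite /posR h10 /tabR13 nth_cat h10.
- rewrite posR_zig //; last by lia.
  destruct i as [|[|[|[|[|[|[|[|[|[|[|[|[|i]]]]]]]]]]]]]; try (exfalso; lia); reflexivity.
Qed.

Lemma stepR i : (3 <= i)%N -> (i < nR)%N -> exists p q w, stepOK (posR B) i p q w.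
Proof.
move=> H3 Hi.
case: (ltnP i 13) => h13.
- destruct i as [|[|[|[|[|[|[|[|[|[|[|[|[|i]]]]]]]]]]]]]; try (exfalso; lia).
  + exists 1%N, 2%N, 0%N.
    rewrite /stepOK !posR_13 //; by repeat split; fin.
  + exists 2%N, 3%N, 1%N.
    rewrite /stepOK !posR_13 //; by repeat split; fin.
  + exists 3%N, 4%N, 2%N.
    rewrite /stepOK !posR_13 //; by repeat split; fin.
  + exists 3%N, 5%N, 4%N.
    rewrite /stepOK !posR_13 //; by repeat split; fin.
  + exists 5%N, 6%N, 3%N.
    rewrite /stepOK !posR_13 //; by repeat split; fin.
  + exists 6%N, 7%N, 5%N.
    rewrite /stepOK !posR_13 //; by repeat split; fin.
  + exists 7%N, 8%N, 6%N.
    rewrite /stepOK !posR_13 //; by repeat split; fin.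
  + exists 8%N, 9%N, 7%N.
    rewrite /stepOK !posR_13 //; by repeat split; fin.
  + exists 10%N, 8%N, 9%N.
    rewrite /stepOK !posR_13 //; by repeat split; fin.
  + exists 11%N, 10%N, 8%N.
    rewrite /stepOK !posR_13 //; by repeat split; fin.
- case: (posR_spec Hi) => [[h _]|[[h _]|[t [ht [-> _]]]]]; first by exfalso; lia.
  + exists (i-1)%N, (i-2)%N, (i-3)%N.
    rewrite /stepOK !posR_zig; try zl.
    have [k Hk] : exists k, (i - 7 = 2*k \/ i - 7 = 2*k+1)%N by exists ((i-7) %/ 2); lia.
    case: Hk => ek.
    * have -> : (i - 1 - 7 = 2*k - 1)%N by lia.
      have -> : (i - 2 - 7 = 2*k - 2)%N by lia.
      have -> : (i - 3 - 7 = 2*k - 3)%N by lia.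
      rewrite ek; by repeat split; fin.
    * have -> : (i - 1 - 7 = 2*k)%N by lia.
      have -> : (i - 2 - 7 = 2*k - 1)%N by lia.
      have -> : (i - 3 - 7 = 2*k - 2)%N by lia.
      rewrite ek; by repeat split; fin.
  + case hm : (memS B t).
    * exists (6*t+17)%N, (6*t+15)%N, (6*t+16)%N.
      rewrite /stepOK posR_tooth // hm !posR_zig; try zl.
      by repeat split; fin.
    * exists (6*t+18)%N, (6*t+20)%N, (6*t+19)%N.
      rewrite /stepOK posR_tooth // hm !posR_zig; try zl.
      by repeat split; fin.
Qed.

Lemma posL_small j : (j < 4)%N -> posL A j = nth (0,0)%Z [:: (0,0); (1,0); (0,1); (1,1)]%Z j.
Proof.
move=> h; rewrite posL_strip; last by lia.
destruct j as [|[|[|[|j]]]]; try (exfalso; lia); reflexivity.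
Qed.

Lemma nsL j u : (j < 2)%N -> (u < nL)%N -> Qd (posL A j) (posL A u) = 1%Z -> (u < 4)%N.
Proof.
move=> hj hu hq; have := Qd_small (Z.eq_le_incl _ _ hq).
rewrite posL_small; last by lia.
specL0 hu; destruct j as [|[|j]]; cbn [nth]; move=> [h1 [h2 h3]]; zl.
Qed.

Lemma nsR j v : (j < 2)%N -> (2 <= v)%N -> (v < nR)%N -> Qd (posR B j) (posR B v) = 1%Z ->
  v = 2%N \/ v = 3%N.
Proof.
move=> hj hv2 hv hq; have := Qd_small (Z.eq_le_incl _ _ hq).
rewrite posR_13; last by lia.
specR0 hv; destruct j as [|[|j]]; cbn [nth tabR13 tabR cat]; move=> [h1 [h2 h3]];
 try (match goal with H : is_true (v < 10)%N |- _ => tab10 v end); cbn [nth tabR fst snd] in *; zl.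
Qed.

End Constr.



Section Glue2.
Variable N : nat.

Definition LG (A : {set 'I_N}) : sgraph 2 :=
  @SGraph 2 (nL N) (fun u w : 'I_(nL N) => Z.eqb (Qd (posL A u) (posL A w)) 1)
          (fun i : 'I_2 => inord i).
Definition RG (B : {set 'I_N}) : sgraph 2 :=
  @SGraph 2 (nR N) (fun u w : 'I_(nR N) => Z.eqb (Qd (posR B u) (posR B w)) 1)
          (fun i : 'I_2 => inord i).

Variables A B : {set 'I_N}.

Notation G := (gV (LG A) (RG B)).

Definition gpos (x : G) : Z * Z :=
  match x with inl u => posL A u | inr v => posR B (val v) end.

Definition cross (x y : G) : bool :=
  match x, y with
  | inl u, inr _ => (2 <= u)%N
  | inr _, inl u => (2 <= u)%N
  | _, _ => false end.

Lemma nL_gt : (2 < nL N)%N. Proof. rewrite /nL; lia. Qed.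
Lemma nR_gt : (12 < nR N)%N. Proof. rewrite /nR; lia. Qed.

Lemma liftR_small (v : 'I_(nR N)) : (v < 2)%N ->
  liftR (LG A) (RG B) v = inl (inord v).
Proof.
move=> hv; rewrite /liftR; case: pickP => [i /eqP Hi | H].
- have e : nat_of_ord i = nat_of_ord v.
    by rewrite -Hi /= inordK //; have := nR_gt; have := ltn_ord i; lia.
  by rewrite /= e.
- exfalso; have := H (Ordinal hv); rewrite /= => /negbT/eqP; apply.
  by apply: val_inj; rewrite /= inordK.
Qed.

Lemma liftR_big (v : 'I_(nR N)) : (2 <= v)%N ->
  exists pf, liftR (LG A) (RG B) v = inr (exist _ v pf).
Proof.
move=> hv; rewrite /liftR; case: pickP => [i /eqP Hi | H].
- exfalso; have : nat_of_ord (sS (RG B) i) = v by rewrite Hi.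
  rewrite /= inordK; first by have := ltn_ord i; lia.
  by have := nR_gt; have := ltn_ord i; lia.
- by eexists.
Qed.

Lemma gpos_liftR (v : 'I_(nR N)) : gpos (liftR (LG A) (RG B) v) = posR B v.
Proof.
case: (ltnP v 2) => hv.
- rewrite liftR_small //= inordK; last by have := nL_gt; lia.
  rewrite posL_small; last by lia.
  rewrite posR_13; last by lia.
  by destruct v as [[|[|v]] hv']; try (exfalso; lia).
- by case: (liftR_big hv) => pf ->.
Qed.

Lemma cross_liftR (v w : 'I_(nR N)) :
  cross (liftR (LG A) (RG B) v) (liftR (LG A) (RG B) w) = false.
Proof.
have K : forall u : 'I_(nR N), (exists pf, liftR (LG A) (RG B) u = inr pf) \/
             (exists u' : 'I_(nL N), liftR (LG A) (RG B) u = inl u' /\ (u' < 2)%N).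
  move=> u; case: (ltnP u 2) => hu.
  + right; exists (inord u); rewrite liftR_small // inordK //; have := nL_gt; lia.
  + left; case: (liftR_big hu) => pf ->; by eexists.
case: (K v) => [[p ->]|[u' [-> h]]]; case: (K w) => [[p' ->]|[u'' [-> h']]] //=;
  by apply/negbTE; rewrite -ltnNge.
Qed.

Lemma posLR j : (j < 2)%N -> posL A j = posR B j.
Proof.
move=> h; rewrite posL_small; last by lia.
rewrite posR_13; last by lia.
by destruct j as [|[|j]]; try (exfalso; lia).
Qed.

Lemma nonspec_ge2 (v : 'I_(nR N)) : ~~ [exists i, sS (RG B) i == v] -> (2 <= v)%N.
Proof.
case: (ltnP v 2) => // hv /existsP []; exists (Ordinal hv).
by apply/eqP/val_inj; rewrite /= inordK.
Qed.

Lemma liftR_val (v : {v : 'I_(nR N) | ~~ [exists i, sS (RG B) i == v]}) :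
  liftR (LG A) (RG B) (val v) = inr v.
Proof.
case: (liftR_big (nonspec_ge2 (valP v))) => pf ->.
by congr inr; apply: val_inj.
Qed.

Lemma gadj_char (x y : G) :
  gadj (LG A) (RG B) x y = Z.eqb (Qd (gpos x) (gpos y)) 1 && ~~ cross x y.
Proof.
apply/idP/idP.
- rewrite /gadj => /orP [/existsP [u /existsP [w /and3P [Huw /eqP <- /eqP <-]]]|
                        /existsP [u /existsP [w /and3P [Huw /eqP <- /eqP <-]]]].
  + by move: Huw; rewrite /= => ->.
  + by rewrite !gpos_liftR cross_liftR; move: Huw; rewrite /= => ->.
- move=> /andP [Hq Hc]; rewrite /gadj; apply/orP.
  case: x Hq Hc => [u|v]; case: y => [w|v'] Hq Hc.
  + left; apply/existsP; exists u; apply/existsP; exists w.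
    by rewrite /liftL !eqxx !andbT.
  + right; apply/existsP; exists (inord u); apply/existsP; exists (val v').
    have hu : (u < 2)%N by move: Hc; rewrite /= -ltnNge.
    have hu' : nat_of_ord (inord u : 'I_(nR N)) = u.
      by rewrite inordK //; have := nR_gt; lia.
    rewrite liftR_val liftR_small hu' //.
    have -> : (inord u : 'I_(nL N)) = u by apply: inord_val.
    by rewrite !eqxx !andbT /= hu' -posLR.
  + right; apply/existsP; exists (val v); apply/existsP; exists (inord w).
    have hw : (w < 2)%N by move: Hc; rewrite /= -ltnNge.
    have hw' : nat_of_ord (inord w : 'I_(nR N)) = w.
      by rewrite inordK //; have := nR_gt; lia.
    rewrite liftR_val liftR_small hw' //.
    have -> : (inord w : 'I_(nL N)) = w by apply: inord_val.
    by rewrite !eqxx !andbT /= hw' -(posLR hw).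
  + right; apply/existsP; exists (val v); apply/existsP; exists (val v').
    by rewrite !liftR_val !eqxx !andbT.
Qed.

End Glue2.


Section Reals3.
Local Open Scope R_scope.

Definition D (p q : R * R) : R := (fst p - fst q)^2 + (snd p - snd q)^2.

Lemma pdistE p q : pdist p q = sqrt (D p q).
Proof. reflexivity. Qed.

Lemma D_ge0 p q : 0 <= D p q.
Proof. rewrite /D; apply Rplus_le_le_0_compat; apply pow2_ge_0. Qed.

Lemma D_sym p q : D p q = D q p.
Proof. rewrite /D; ring. Qed.

Lemma pdist2 p q : pdist p q = 2 <-> D p q = 4.
Proof.
rewrite pdistE; split => H.
- have := sqrt_sqrt _ (D_ge0 p q); rewrite H; lra.
- rewrite H; have -> : 4 = 2 * 2 by ring.
  by rewrite sqrt_square; lra.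
Qed.

Lemma pdist_ge2 p q : 2 <= pdist p q -> 4 <= D p q.
Proof.
rewrite pdistE => H; have := sqrt_sqrt _ (D_ge0 p q); nra.
Qed.

Lemma D_ge4 p q : 4 <= D p q -> 2 <= pdist p q.
Proof.
rewrite pdistE => H; have -> : 2 = sqrt (2 * 2) by rewrite sqrt_square; lra.
apply: sqrt_le_1; lra.
Qed.

Lemma sumsq0 a b : a * a + b * b = 0 -> a = 0 /\ b = 0.
Proof.
move=> H; have ha := Rle_0_sqr a; have hb := Rle_0_sqr b; rewrite /Rsqr in ha hb.
have h1 : a * a = 0 by lra.
have h2 : b * b = 0 by lra.
by case: (Rmult_integral _ _ h1) => ->; case: (Rmult_integral _ _ h2) => ->.
Qed.

Lemma apex (P Q W X : R * R) :
  D P Q = 4 -> D P W = 4 -> D Q W = 4 -> D X P = 4 -> D X Q = 4 -> X <> W ->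
  X = (fst P + fst Q - fst W, snd P + snd Q - snd W).
Proof.
case: P => p1 p2; case: Q => q1 q2; case: W => w1 w2; case: X => x1 x2.
rewrite /D /= => hPQ hPW hQW hXP hXQ hXW.
set d1 := q1 - p1; set d2 := q2 - p2.
set u1 := 2*x1 - p1 - q1; set u2 := 2*x2 - p2 - q2.
set v1 := 2*w1 - p1 - q1; set v2 := 2*w2 - p2 - q2.
have ud : u1 * d1 + u2 * d2 = 0.
  have E : u1 * d1 + u2 * d2 = ((x1 - p1) ^ 2 + (x2 - p2) ^ 2) - ((x1 - q1) ^ 2 + (x2 - q2) ^ 2)
    by rewrite /u1 /u2 /d1 /d2; ring.
  rewrite E; lra.
have vd : v1 * d1 + v2 * d2 = 0.
  have E : v1 * d1 + v2 * d2 = ((p1 - w1) ^ 2 + (p2 - w2) ^ 2) - ((q1 - w1) ^ 2 + (q2 - w2) ^ 2)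
    by rewrite /v1 /v2 /d1 /d2; ring.
  rewrite E; lra.
have uu : u1 * u1 + u2 * u2 = 12.
  have E : u1 * u1 + u2 * u2 = 2 * ((x1 - p1) ^ 2 + (x2 - p2) ^ 2) + 2 * ((x1 - q1) ^ 2 + (x2 - q2) ^ 2)
             - ((p1 - q1) ^ 2 + (p2 - q2) ^ 2)
    by rewrite /u1 /u2; ring.
  rewrite E; lra.
have vv : v1 * v1 + v2 * v2 = 12.
  have E : v1 * v1 + v2 * v2 = 2 * ((p1 - w1) ^ 2 + (p2 - w2) ^ 2) + 2 * ((q1 - w1) ^ 2 + (q2 - w2) ^ 2)
             - ((p1 - q1) ^ 2 + (p2 - q2) ^ 2)
    by rewrite /v1 /v2; ring.
  rewrite E; lra.
have dd : d1 * d1 + d2 * d2 = 4.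
  have E : d1 * d1 + d2 * d2 = (p1 - q1) ^ 2 + (p2 - q2) ^ 2 by rewrite /d1 /d2; ring.
  rewrite E; lra.
set c := u1 * v2 - u2 * v1.
have c1 : c * d1 = 0.
  have E : c * d1 = v2 * (u1 * d1 + u2 * d2) - u2 * (v1 * d1 + v2 * d2) by rewrite /c; ring.
  rewrite E ud vd; ring.
have c2 : c * d2 = 0.
  have E : c * d2 = u1 * (v1 * d1 + v2 * d2) - v1 * (u1 * d1 + u2 * d2) by rewrite /c; ring.
  rewrite E ud vd; ring.
have c0 : c = 0.
  have E : c * c * 4 = (c * d1) * (c * d1) + (c * d2) * (c * d2) by rewrite -dd; ring.
  rewrite c1 c2 in E.
  have : c * c = 0 by lra.
  by case/Rmult_integral.
set e := u1 * v1 + u2 * v2.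
have ee : e * e = 144.
  have E : e * e + c * c = (u1 * u1 + u2 * u2) * (v1 * v1 + v2 * v2) by rewrite /e /c; ring.
  rewrite uu vv c0 in E; lra.
have [e12|e12] : e = 12 \/ e = -12 by nra.
- exfalso; apply: hXW.
  have E : (u1 - v1) * (u1 - v1) + (u2 - v2) * (u2 - v2) = 0.
    have E : (u1 - v1) * (u1 - v1) + (u2 - v2) * (u2 - v2) = (u1*u1+u2*u2) + (v1*v1+v2*v2) - 2 * e
      by rewrite /e; ring.
    rewrite E uu vv e12; ring.
  case: (sumsq0 E) => h1 h2.
  rewrite /u1 /v1 in h1; rewrite /u2 /v2 in h2.
  f_equal; lra.
- have E : (u1 + v1) * (u1 + v1) + (u2 + v2) * (u2 + v2) = 0.
    have E : (u1 + v1) * (u1 + v1) + (u2 + v2) * (u2 + v2) = (u1*u1+u2*u2) + (v1*v1+v2*v2) + 2 * e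
      by rewrite /e; ring.
    rewrite E uu vv e12; ring.
  case: (sumsq0 E) => h1 h2.
  rewrite /u1 /v1 in h1; rewrite /u2 /v2 in h2.
  f_equal; lra.
Qed.

Definition Fm (c0 e1 e2 : R * R) (z : Z * Z) : R * R :=
  (fst c0 + IZR (fst z) * fst e1 + IZR (snd z) * fst e2,
   snd c0 + IZR (fst z) * snd e1 + IZR (snd z) * snd e2).

Lemma IZR_Qd z z' : IZR (Qd z z') =
  (IZR (fst z) - IZR (fst z')) * (IZR (fst z) - IZR (fst z')) +
  (IZR (fst z) - IZR (fst z')) * (IZR (snd z) - IZR (snd z')) +
  (IZR (snd z) - IZR (snd z')) * (IZR (snd z) - IZR (snd z')).
Proof. by rewrite /Qd !plus_IZR !mult_IZR !minus_IZR. Qed.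

Lemma Fm_D c0 e1 e2 :
  fst e1 ^ 2 + snd e1 ^ 2 = 4 -> fst e2 ^ 2 + snd e2 ^ 2 = 4 ->
  (fst e1 - fst e2) ^ 2 + (snd e1 - snd e2) ^ 2 = 4 ->
  forall z z', D (Fm c0 e1 e2 z) (Fm c0 e1 e2 z') = 4 * IZR (Qd z z').
Proof.
move=> h1 h2 h12 z z'; rewrite IZR_Qd /D /Fm /=.
set a := IZR (fst z) - IZR (fst z'); set b := IZR (snd z) - IZR (snd z').
have E : (fst c0 + IZR (fst z) * fst e1 + IZR (snd z) * fst e2 -
    (fst c0 + IZR (fst z') * fst e1 + IZR (snd z') * fst e2)) ^ 2 +
   (snd c0 + IZR (fst z) * snd e1 + IZR (snd z) * snd e2 -
    (snd c0 + IZR (fst z') * snd e1 + IZR (snd z') * snd e2)) ^ 2 =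
   a * a * (fst e1 ^ 2 + snd e1 ^ 2) + b * b * (fst e2 ^ 2 + snd e2 ^ 2)
   + a * b * ((fst e1 ^ 2 + snd e1 ^ 2) + (fst e2 ^ 2 + snd e2 ^ 2)
              - ((fst e1 - fst e2) ^ 2 + (snd e1 - snd e2) ^ 2))
  by rewrite /a /b; ring.
rewrite E h1 h2 h12; ring.
Qed.

Lemma Fm_add3 c0 e1 e2 z1 z2 z3 :
  Fm c0 e1 e2 (zadd3 z1 z2 z3) =
  (fst (Fm c0 e1 e2 z1) + fst (Fm c0 e1 e2 z2) - fst (Fm c0 e1 e2 z3),
   snd (Fm c0 e1 e2 z1) + snd (Fm c0 e1 e2 z2) - snd (Fm c0 e1 e2 z3)).
Proof. rewrite /Fm /zadd3 /= !minus_IZR !plus_IZR; f_equal; ring. Qed.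

Lemma shell (n b : nat) (X : nat -> R * R) (ps : nat -> Z * Z) (F : Z * Z -> R * R) :
  (forall z z', D (F z) (F z') = 4 * IZR (Qd z z')) ->
  (forall z1 z2 z3, F (zadd3 z1 z2 z3) =
     (fst (F z1) + fst (F z2) - fst (F z3), snd (F z1) + snd (F z2) - snd (F z3))) ->
  (forall i j, (i < n)%N -> (j < n)%N -> Qd (ps i) (ps j) = 1%Z -> D (X i) (X j) = 4) ->
  (forall i j, (i < n)%N -> (j < n)%N -> i <> j -> X i <> X j) ->
  (forall i, (i < b)%N -> X i = F (ps i)) ->
  (forall i, (b <= i)%N -> (i < n)%N -> exists p q w, stepOK ps i p q w) ->
  forall i, (i < n)%N -> X i = F (ps i).
Proof.
move=> FD Fadd Hadj Hinj Hbase Hstep i.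
elim/ltn_ind: i => i IH Hi.
case: (ltnP i b) => hb; first by apply: Hbase.
case: (Hstep i hb Hi) => p [q [w [hp [hq [hw [hip [hiq [hps [hpq [hpw hqw]]]]]]]]]].
have Hp : (p < n)%N by apply: ltn_trans Hi.
have Hq : (q < n)%N by apply: ltn_trans Hi.
have Hw : (w < n)%N by apply: ltn_trans Hi.
rewrite hps Fadd.
apply: apex.
- by rewrite FD hpq; lra.
- by rewrite FD hpw; lra.
- by rewrite FD hqw; lra.
- by rewrite -(IH p hp Hp); apply: Hadj.
- by rewrite -(IH q hq Hq); apply: Hadj.
- rewrite -(IH w hw Hw); apply: Hinj => // E; by move: hw; rewrite E ltnn.
Qed.

Definition Gm (z : Z * Z) : R * R := (2 * IZR (fst z) + IZR (snd z), sqrt 3 * IZR (snd z)).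

Lemma Gm_D z z' : D (Gm z) (Gm z') = 4 * IZR (Qd z z').
Proof.
rewrite IZR_Qd /D /Gm; cbn [fst snd].
have s3 := sqrt_sqrt 3 (ltac:(lra)).
set a := IZR (fst z); set a' := IZR (fst z'); set b := IZR (snd z); set b' := IZR (snd z').
have E : (sqrt 3 * b - sqrt 3 * b') ^ 2 = (sqrt 3 * sqrt 3) * ((b - b') * (b - b')) by ring.
rewrite E s3; ring.
Qed.

End Reals3.


Section Main.
Variable N : nat.
Variables A B : {set 'I_N}.
Notation G := (gV (LG A) (RG B)).
Notation gadjG := (gadj (LG A) (RG B)).
Notation lR := (liftR (LG A) (RG B)).

Definition vL (i : nat) : G := inl (inord i).
Definition vR (i : nat) : G := lR (inord i).

Lemma gpos_vL i : (i < nL N)%N -> gpos (vL i) = posL A i.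
Proof. by move=> h; rewrite /vL /= inordK. Qed.

Lemma gpos_vR i : (i < nR N)%N -> gpos (vR i) = posR B i.
Proof. by move=> h; rewrite /vR gpos_liftR inordK. Qed.

Lemma cross_vL i j : cross (vL i) (vL j) = false. Proof. by []. Qed.
Lemma cross_vR i j : cross (vR i) (vR j) = false. Proof. exact: cross_liftR. Qed.

Lemma adjL i j : (i < nL N)%N -> (j < nL N)%N -> Qd (posL A i) (posL A j) = 1%Z ->
  gadjG (vL i) (vL j).
Proof. by move=> hi hj hq; rewrite gadj_char cross_vL !gpos_vL // hq. Qed.

Lemma adjR i j : (i < nR N)%N -> (j < nR N)%N -> Qd (posR B i) (posR B j) = 1%Z ->
  gadjG (vR i) (vR j).
Proof. by move=> hi hj hq; rewrite gadj_char cross_vR !gpos_vR // hq. Qed.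

Lemma vL_inj i j : (i < nL N)%N -> (j < nL N)%N -> vL i = vL j -> i = j.
Proof.
move=> hi hj [] /(f_equal (@nat_of_ord _)); rewrite !inordK //.
Qed.

Lemma vR_inj i j : (i < nR N)%N -> (j < nR N)%N -> vR i = vR j -> i = j.
Proof.
move=> hi hj /(f_equal (@gpos N A B)); rewrite !gpos_vR // => E.
exact: (posR_inj hi hj E).
Qed.

Lemma vR_small i : (i < 2)%N -> vR i = vL i.
Proof.
move=> h; rewrite /vR liftR_small; last by rewrite inordK //; have := nR_gt N; lia.
by rewrite inordK //; have := nR_gt N; lia.
Qed.

Lemma vR2_ne_vL2 : vR 2 <> vL 2.
Proof.
rewrite /vR; have h : (2 <= (inord 2 : 'I_(nR N)))%N by rewrite inordK //; have := nR_gt N; lia.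
by case: (liftR_big A B h) => pf ->.
Qed.

Lemma gdecomp (x : G) : (exists i, (i < nL N)%N /\ x = vL i) \/ (exists i, (i < nR N)%N /\ x = vR i).
Proof.
case: x => [u|v].
- by left; exists u; split => //; rewrite /vL inord_val.
- right; exists (nat_of_ord (val v)); split => //.
  by rewrite /vR inord_val liftR_val.
Qed.

Section Rigid.
Local Open Scope R_scope.
Variable c : G -> R * R.
Hypothesis Hsep : forall u v : G, u != v -> (2 <= pdist (c u) (c v)).
Hypothesis Hedge : forall u v : G, gadjG u v <-> pdist (c u) (c v) = 2.

Lemma hD u v : gadjG u v -> D (c u) (c v) = 4.
Proof. by move/Hedge/pdist2. Qed.

Lemma hne u v : u <> v -> c u <> c v.
Proof.
move=> /eqP/Hsep/pdist_ge2 h E; rewrite E /D in h.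
have : ((fst (c v) - fst (c v)) ^ 2 + (snd (c v) - snd (c v)) ^ 2 = 0) by ring.
lra.
Qed.

Definition c0 := c (vL 0).
Definition e1 := (fst (c (vL 1)) - fst c0, snd (c (vL 1)) - snd c0).
Definition e2 := (fst (c (vL 2)) - fst c0, snd (c (vL 2)) - snd c0).
Definition FF := Fm c0 e1 e2.

Lemma qL01 : Qd (posL A 0) (posL A 1) = 1%Z.
Proof. by rewrite !posL_small. Qed.
Lemma qL02 : Qd (posL A 0) (posL A 2) = 1%Z.
Proof. by rewrite !posL_small. Qed.
Lemma qL12 : Qd (posL A 1) (posL A 2) = 1%Z.
Proof. by rewrite !posL_small. Qed.

Lemma nLgt : (3 < nL N)%N. Proof. rewrite /nL; lia. Qed.

Lemma FFD z z' : D (FF z) (FF z') = (4 * IZR (Qd z z')).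
Proof.
apply: Fm_D.
- have : gadjG (vL 0) (vL 1) by apply: adjL; [have := nLgt; lia|have := nLgt; lia|exact: qL01].
  move/hD.
  by rewrite D_sym /D /e1 /c0.
- have : gadjG (vL 0) (vL 2) by apply: adjL; [have := nLgt; lia|have := nLgt; lia|exact: qL02].
  move/hD.
  by rewrite D_sym /D /e2 /c0.
- have : gadjG (vL 1) (vL 2) by apply: adjL; [have := nLgt; lia|have := nLgt; lia|exact: qL12].
  move/hD.
  move=> H; rewrite -H /D /e1 /e2 /c0; cbn [fst snd]; ring.
Qed.

Lemma rigidL i : (i < nL N)%N -> c (vL i) = FF (posL A i).
Proof.
apply: (@shell (nL N) 3 (fun i => c (vL i)) (posL A) FF).
- exact: FFD.
- move=> *; exact: Fm_add3.
- move=> i' j hi hj hq; exact: hD (adjL hi hj hq).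
- move=> i' j hi hj hne'; apply: hne => E; apply: hne'; exact: vL_inj E.
- move=> i' hi; rewrite posL_small; last by lia.
  rewrite /FF /Fm /e1 /e2 /c0.
  destruct i' as [|[|[|i']]]; try (exfalso; lia); cbn [nth fst snd IZR];
    rewrite [LHS]surjective_pairing; f_equal; ring.
- move=> i' h1 h2; exact: stepL.
Qed.

Lemma nRgt : (12 < nR N)%N. Proof. rewrite /nR; lia. Qed.

Lemma rigidR i : (i < nR N)%N -> c (vR i) = FF (posR B i).
Proof.
apply: (@shell (nR N) 3 (fun i => c (vR i)) (posR B) FF).
- exact: FFD.
- move=> *; exact: Fm_add3.
- move=> i' j hi hj hq; exact: hD (adjR hi hj hq).
- move=> i' j hi hj hne'; apply: hne => E; apply: hne'; exact: vR_inj E.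
- move=> i' hi.
  case: (ltnP i' 2) => h2.
  + rewrite vR_small // rigidL; last by have := nLgt; lia.
    by rewrite (posLR A B).
  + have -> : i' = 2%N by lia.
    have E : posR B 2 = zadd3 (posL A 0) (posL A 1) (posL A 2).
      by rewrite posR_13 // !posL_small.
    have nl := nLgt; have nr := nRgt.
    rewrite E /FF Fm_add3 -/FF -!rigidL; try lia.
    apply: apex.
    * have : gadjG (vL 0) (vL 1) by apply: adjL; [lia|lia|exact: qL01].
      exact: hD.
    * have : gadjG (vL 0) (vL 2) by apply: adjL; [lia|lia|exact: qL02].
      exact: hD.
    * have : gadjG (vL 1) (vL 2) by apply: adjL; [lia|lia|exact: qL12].
      exact: hD.
    * rewrite -(vR_small (ltac:(done) : (0 < 2)%N)).
      have : gadjG (vR 2) (vR 0) by apply: adjR; [lia|lia|by rewrite !posR_13].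
      exact: hD.
    * rewrite -(vR_small (ltac:(done) : (1 < 2)%N)).
      have : gadjG (vR 2) (vR 1) by apply: adjR; [lia|lia|by rewrite !posR_13].
      exact: hD.
    * apply: hne; exact: vR2_ne_vL2.
- move=> i' h1 h2; exact: stepR.
Qed.

Lemma rigid (x : G) : c x = FF (gpos x).
Proof.
case: (gdecomp x) => [[i [hi ->]]|[i [hi ->]]].
- by rewrite rigidL // gpos_vL.
- by rewrite rigidR // gpos_vR.
Qed.

End Rigid.

Lemma memS_both t : memS A t -> memS B t -> A :&: B != set0.
Proof.
case/existsP => j /andP [hj /eqP ej]; case/existsP => j' /andP [hj' /eqP ej'].
have E : j = j' by apply: val_inj; rewrite /= ej ej'.
by apply/set0Pn; exists j; rewrite inE hj E hj'.
Qed.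

Lemma same_side (H : A :&: B = set0) (x y : G) : (Qd (gpos x) (gpos y) <= 1)%Z ->
  (exists i j, [/\ (i < nL N)%N, (j < nL N)%N, x = vL i & y = vL j]) \/
  (exists i j, [/\ (i < nR N)%N, (j < nR N)%N, x = vR i & y = vR j]).
Proof.
have nl := nL_gt N; have nr := nR_gt N.
have key : forall i j, (i < nL N)%N -> (j < nR N)%N -> (Qd (posL A i) (posR B j) <= 1)%Z ->
  (exists i' j', [/\ (i' < nL N)%N, (j' < nL N)%N, vL i = vL i' & vR j = vL j']) \/
  (exists i' j', [/\ (i' < nR N)%N, (j' < nR N)%N, vL i = vR i' & vR j = vR j']).
  move=> i j hi hj hq.
  case: (ltnP i 2) => hi2.
  - right; exists i, j; split => //; [lia|by rewrite vR_small].
  case: (ltnP j 2) => hj2.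
  - left; exists i, j; split => //; [lia|by rewrite vR_small].
  case: (cross_sep hi2 hi hj2 hj hq) => t [_ [_ [_ [ma mb]]]].
  by move: (memS_both ma mb); rewrite H eqxx.
case: (gdecomp x) => [[i [hi ->]]|[i [hi ->]]]; case: (gdecomp y) => [[j [hj ->]]|[j [hj ->]]].
- by left; exists i, j.
- rewrite gpos_vL // gpos_vR // => hq.
  case: (key i j hi hj hq) => [[i' [j' [h1 h2 -> ->]]]|[i' [j' [h1 h2 -> ->]]]].
  + by left; exists i', j'.
  + by right; exists i', j'.
- rewrite gpos_vL // gpos_vR // Qd_sym => hq.
  case: (key j i hj hi hq) => [[i' [j' [h1 h2 -> ->]]]|[i' [j' [h1 h2 -> ->]]]].
  + by left; exists j', i'.
  + by right; exists j', i'.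
- by right; exists i, j.
Qed.

Lemma disj_penny (H : A :&: B = set0) : penny gadjG.
Proof.
exists (fun x => Gm (gpos x)); split.
- move=> u v /eqP huv; apply: D_ge4; rewrite Gm_D.
  have q0 := @Qd_ge0 (gpos u) (gpos v).
  have q1 : Qd (gpos u) (gpos v) <> 0%Z.
    move=> hq; apply: huv.
    have E := Qd0 hq.
    have : (Qd (gpos u) (gpos v) <= 1)%Z by lia.
    case/(same_side H) => [[i [j [hi hj eu ev]]]|[i [j [hi hj eu ev]]]]; subst u v.
    + by rewrite !gpos_vL // in E; rewrite (posL_inj hi hj E).
    + by rewrite !gpos_vR // in E; rewrite (posR_inj hi hj E).
  have : (1 <= Qd (gpos u) (gpos v))%Z by lia.
  move/IZR_le; rewrite /=; lra.
- move=> u v; rewrite pdist2 Gm_D; split.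
  + rewrite gadj_char => /andP [/Z.eqb_eq -> _]; rewrite /=; lra.
  + move=> h4.
    have hq : Qd (gpos u) (gpos v) = 1%Z by apply: eq_IZR; rewrite /=; lra.
    case: (same_side H (Z.eq_le_incl _ _ hq)) => [[i [j [hi hj eu ev]]]|[i [j [hi hj eu ev]]]]; subst u v.
    * by apply: adjL => //; rewrite !gpos_vL // in hq.
    * by apply: adjR => //; rewrite !gpos_vR // in hq.
Qed.

Lemma penny_disj : penny gadjG -> A :&: B = set0.
Proof.
case=> c [Hsep Hedge].
case: (set_0Vmem (A :&: B)) => [//|[t]]; rewrite inE => /andP [ta tb].
exfalso.
have mA : memS A t by apply/existsP; exists t; rewrite ta eqxx.
have mB : memS B t by apply/existsP; exists t; rewrite tb eqxx.
have ht := ltn_ord t.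
have hx : (6*N+4+t < nL N)%N by rewrite /nL; lia.
have hy : (6*N+15+t < nR N)%N by rewrite /nR; lia.
have : gadjG (vL (6*N+4+t)) (vR (6*N+15+t)).
  apply/Hedge/pdist2; rewrite !(rigid Hsep Hedge) (FFD Hedge).
  by rewrite gpos_vL // gpos_vR // conflict //= ; lra.
rewrite gadj_char => /andP [_].
have h2 : (2 <= (inord (6*N+15+t) : 'I_(nR N)))%N by rewrite inordK //; lia.
rewrite /vR; case: (liftR_big A B h2) => pf ->.
by rewrite /vL /= inordK //; lia.
Qed.


Lemma wfL : sgraph_wf (LG A).
Proof.
split; [|split].
- by move=> u w /=; rewrite Qd_sym.
- by move=> u /=; rewrite Qd_refl.
- move=> i j E; apply: val_inj; move: (f_equal (@nat_of_ord _) E) => /=.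
  have := nL_gt N; have := ltn_ord i; have := ltn_ord j.
  move=> h1 h2 h3 E1; rewrite !inordK in E1; lia.
Qed.

Lemma wfR : sgraph_wf (RG B).
Proof.
split; [|split].
- by move=> u w /=; rewrite Qd_sym.
- by move=> u /=; rewrite Qd_refl.
- move=> i j E; apply: val_inj; move: (f_equal (@nat_of_ord _) E) => /=.
  have := nR_gt N; have := ltn_ord i; have := ltn_ord j.
  move=> h1 h2 h3 E1; rewrite !inordK in E1; lia.
Qed.

Lemma gadj_sym : symmetric gadjG.
Proof.
move=> x y; rewrite !gadj_char Qd_sym; congr (_ && ~~ _).
by case: x => ?; case: y => ?.
Qed.

Lemma connL i : (i < nL N)%N -> connect gadjG (vL 0) (vL i).
Proof.
have nl := nLgt.
elim/ltn_ind: i => i IH hi.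
case: (ltnP i 3) => h3.
- destruct i as [|[|[|i]]]; try (exfalso; lia).
  + exact: connect0.
  + by apply: connect1; apply: adjL => //; exact: qL01.
  + by apply: connect1; apply: adjL => //; exact: qL02.
- case: (stepL A h3 hi) => p [q [w [hp [_ [_ [hip _]]]]]].
  have hpn : (p < nL N)%N by lia.
  apply: connect_trans (IH p hp hpn) (connect1 _).
  by apply: adjL => //; rewrite Qd_sym.
Qed.

Lemma connR i : (i < nR N)%N -> connect gadjG (vL 0) (vR i).
Proof.
have nl := nLgt; have nr := nRgt.
elim/ltn_ind: i => i IH hi.
case: (ltnP i 3) => h3.
- case: (ltnP i 2) => h2.
  + by rewrite vR_small //; apply: connL; lia.
  + have -> : i = 2%N by lia.
    apply: connect1; rewrite -(vR_small (ltac:(done) : (0 < 2)%N)).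
    by apply: adjR; [lia|lia|rewrite !posR_13].
- case: (stepR B h3 hi) => p [q [w [hp [_ [_ [hip _]]]]]].
  have hpn : (p < nR N)%N by lia.
  apply: connect_trans (IH p hp hpn) (connect1 _).
  by apply: adjR => //; rewrite Qd_sym.
Qed.

Lemma conn_all (x y : G) : connect gadjG x y.
Proof.
have c0 : forall z : G, connect gadjG (vL 0) z.
  move=> z; case: (gdecomp z) => [[i [hi ->]]|[i [hi ->]]]; [exact: connL|exact: connR].
apply: connect_trans (c0 y).
by rewrite (sym_connect_sym gadj_sym).
Qed.

Lemma card_G : (#|G| <= 14 * N + 19)%N.
Proof.
rewrite /gV card_sum card_ord card_sig.
have := max_card (mem [pred x : 'I_(nR N) | ~~ [exists i, sS (RG B) i == x]]).
move=> h; rewrite card_ord in h; change (sn (LG A)) with (nL N); apply: leq_trans (leq_add (leqnn _) h) _; rewrite /nL /nR; clear h. apply/leP. lia.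
Qed.


Definition isNS (x : G) : bool :=
  match x with inl u => (nat_of_ord u < 4)%N | inr v => (nat_of_ord (val v) < 4)%N end.

Lemma isNS_vL i : (i < nL N)%N -> isNS (vL i) = (i < 4)%N.
Proof. by move=> h; rewrite /vL /= inordK. Qed.

Lemma isNS_vR i : (2 <= i)%N -> (i < nR N)%N -> isNS (vR i) = (i < 4)%N.
Proof.
move=> h2 h; have h' : (2 <= (inord i : 'I_(nR N)))%N by rewrite inordK.
by rewrite /vR; case: (liftR_big A B h') => pf -> /=; rewrite inordK.
Qed.

Lemma gspecE (i : 'I_2) : gspec (LG A) (RG B) i = vL i.
Proof. by []. Qed.

Lemma gNS_char (x : G) : (x \in gNS (LG A) (RG B)) = isNS x.
Proof.
have nl := nLgt; have nr := nRgt.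
rewrite /gNS inE; apply/idP/idP.
- case/existsP => i; rewrite gspecE; have hi := ltn_ord i.
  case/orP => [/eqP ->|]; first by rewrite isNS_vL //; lia.
  rewrite gadj_char => /andP [/Z.eqb_eq hq _].
  case: (gdecomp x) hq => [[j [hj ->]]|[j [hj ->]]] hq.
  + rewrite isNS_vL //; rewrite !gpos_vL // in hq; try lia.
    by apply: (nsL _ hj hq).
  + case: (ltnP j 2) => hj2.
    * rewrite vR_small // isNS_vL //; lia.
    * rewrite isNS_vR // ; rewrite gpos_vL ?gpos_vR // in hq; last by lia.
      rewrite (posLR A B) in hq; last by lia.
      by case: (nsR hi hj2 hj hq) => ->.
- case: (gdecomp x) => [[j [hj ->]]|[j [hj ->]]].
  + rewrite isNS_vL // => h4.
    destruct j as [|[|[|[|j]]]]; try (exfalso; lia).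
    * by apply/existsP; exists ord0; rewrite gspecE eqxx.
    * by apply/existsP; exists (@Ordinal 2 1 isT); rewrite gspecE eqxx.
    * apply/existsP; exists ord0; rewrite gspecE; apply/orP; right.
      by apply: adjL; rewrite /=; [lia|lia|rewrite !posL_small].
    * apply/existsP; exists (@Ordinal 2 1 isT); rewrite gspecE; apply/orP; right.
      by apply: adjL; rewrite /=; [lia|lia|rewrite !posL_small].
  + case: (ltnP j 2) => hj2.
    * rewrite vR_small // isNS_vL; last by lia.
      move=> _; apply/existsP; exists (Ordinal hj2); rewrite gspecE eqxx //.
    * rewrite isNS_vR // => h4.
      have [->|->] : j = 2%N \/ j = 3%N by lia.
      -- apply/existsP; exists ord0; rewrite gspecE; apply/orP; right.
         rewrite -(vR_small (ltac:(done) : (0 < 2)%N)).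
         by apply: adjR; rewrite /=; [lia|lia|rewrite !posR_13].
      -- apply/existsP; exists (@Ordinal 2 1 isT); rewrite gspecE; apply/orP; right.
         rewrite -(vR_small (ltac:(done) : (1 < 2)%N)).
         by apply: adjR; rewrite /=; [lia|lia|rewrite !posR_13].
Qed.

Lemma card_NS : (#|gNS (LG A) (RG B)| <= 6)%N.
Proof.
have nl := nLgt; have nr := nRgt.
pose s := [:: vL 0; vL 1; vL 2; vL 3; vR 2; vR 3].
apply: leq_trans (card_size s).
apply: subset_leq_card; apply/subsetP => x; rewrite gNS_char.
case: (gdecomp x) => [[j [hj ->]]|[j [hj ->]]].
- rewrite isNS_vL // => h4.
  destruct j as [|[|[|[|j]]]]; try (exfalso; lia); by rewrite !inE eqxx ?orbT.
- case: (ltnP j 2) => hj2.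
  + rewrite vR_small // isNS_vL; last by lia.
    move=> h; destruct j as [|[|j]]; try (exfalso; lia); by rewrite !inE eqxx ?orbT.
  + rewrite isNS_vR // => h4.
    have [->|->] : j = 2%N \/ j = 3%N by lia.
    all: by rewrite !inE eqxx ?orbT.
Qed.

End Main.


Lemma gpos_indep N (A B A' B' : {set 'I_N}) (x : gV (LG A) (RG B)) :
  isNS x -> gpos (A:=A) (B:=B) x = gpos (A:=A') (B:=B') x.
Proof.
case: x => [u|v] /= h.
- move: (nat_of_ord u) h => n h. have hu : (n < 6*N+4)%N by lia.
  by rewrite /posL hu.
- move: (nat_of_ord (val v)) h => n h. have hv : (n < 10)%N by lia.
  by rewrite /posR hv.
Qed.

Lemma NSiso N (A B A' B' : {set 'I_N}) : NS_iso (LG A) (RG B) (LG A') (RG B').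
Proof.
exists (fun x => x); split; [by move=> x y _ _|split; [|split]].

- apply/setP => x. apply/imsetP/idP.
  + case=> y hy ->. rewrite (gNS_char (A:=A') (B:=B')).
    rewrite (gNS_char (A:=A) (B:=B)) in hy. exact hy.
  + move=> hx; exists x; last reflexivity.
    rewrite (gNS_char (A:=A) (B:=B)).
    rewrite (gNS_char (A:=A') (B:=B')) in hx. exact hx.
- move=> x y hx hy. rewrite !gadj_char.
  rewrite (gNS_char (A:=A) (B:=B)) in hx; rewrite (gNS_char (A:=A) (B:=B)) in hy.
  rewrite -(gpos_indep A' B' hx) -(gpos_indep A' B' hy).
  reflexivity.
- reflexivity.
Qed.

Local Open Scope R_scope.

Lemma size_bound N (A B : {set 'I_N}) : (0 < N)%coq_nat ->
  INR #|gV (LG A) (RG B)| <= 33 * Rpower (INR N) (1 / INR 1).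
Proof.
move=> HN.
have -> : 1 / INR 1 = 1 by rewrite /=; field.
rewrite Rpower_1; last by apply: lt_0_INR.
have h := card_G A B.
have h' : (#|gV (LG A) (RG B)| <= 33 * N)%coq_nat by move/leP: h; lia.
apply: Rle_trans (le_INR _ _ h') _.
rewrite mult_INR; apply: Rmult_le_compat_r; first exact: pos_INR.
by rewrite /=; lra.
Qed.

Theorem theorem5p1 : disjointness_expressing penny 6 1.
Proof.
exists 33; split; first lra.
move=> N HN; exists 2%N, (@LG N), (@RG N).
split; first by move=> X; split; [exact: wfL|exact: wfR].
split.
  move=> A B; split; first exact: conn_all.
  by apply: size_bound; move: HN; lia.
split; first by move=> A A' B B'; exact: NSiso.
split; first by move=> A B; exact: card_NS.
move=> A B; split; [exact: penny_disj|exact: disj_penny].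
Qed.
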